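(* There exists a finite set $B$ of closed, bounded line segments in $\mathbb{R}^2$ (one may take three segments) such that $R(B)=\{p\in\mathbb{R}^2: \text{every line through } p \text{ intersects } B\}$ has a maximal region consisting of a single point $p$ that does not lie on any segment of $B$.
   Context: A region is a bounded, closed, connected subset of $\mathbb{R}^2$. For a set $P\subseteq\mathbb{R}^2$, a maximal region of $P$ is a region $R$ such that for every point $p\in R$ there is an open ball $A$ centered at $p$ with $A\cap R = A\cap P$. A line intersects $B$ if it meets at least one segment of $B$. *)

(* Defs.v *)
(* points of R^2 are pairs (x, y) : R * R, with the
   product topology (which is the Euclidean topology). *)
From HB Require Import structures.
From mathcomp Require Import all_boot all_order all_algebra.
From mathcomp Require Import all_classical all_reals all_analysis.
Set Implicit Arguments. Unset Strict Implicit. Unset Printing Implicit Defensive.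
Import Order.TTheory GRing.Theory Num.Theory.
Import numFieldNormedType.Exports.
Local Open Scope classical_set_scope.
Local Open Scope ring_scope.

Notation pt R := (R * R)%type.

Definition dist2 (R : realType) (p q : pt R) : R :=
  (p.1 - q.1) ^+ 2 + (p.2 - q.2) ^+ 2.

Definition eball (R : realType) (p : pt R) (r : R) : set (pt R) :=
  [set q | dist2 p q < r ^+ 2].

Definition segment (R : realType) (s : pt R * pt R) : set (pt R) :=
  [set q | exists t : R, 0 <= t <= 1 /\
     q = (s.1.1 + t * (s.2.1 - s.1.1), s.1.2 + t * (s.2.2 - s.1.2))].

Definition line (R : realType) (p d : pt R) : set (pt R) :=
  [set q | exists u : R, q = (p.1 + u * d.1, p.2 + u * d.2)].

Definition line_meets (R : realType) (L : set (pt R)) (B : seq (pt R * pt R)) :=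
  exists2 s, s \in B & exists q, L q /\ segment s q.

Definition RB (R : realType) (B : seq (pt R * pt R)) : set (pt R) :=
  [set p | forall d : pt R, d != (0, 0) -> line_meets (line p d) B].

Definition bounded2 (R : realType) (A : set (pt R)) : Prop :=
  exists M : R, forall q, A q -> `|q.1| <= M /\ `|q.2| <= M.

Definition region (R : realType) (A : set (pt R)) : Prop :=
  bounded2 A /\ @closed (R * R)%type A /\ @connected (R * R)%type A.

Definition maximal_region (R : realType) (P A : set (pt R)) : Prop :=
  region A /\
  forall p, A p -> exists2 r : R, 0 < r & eball p r `&` A = eball p r `&` P.

(* Main.v *)
Require Import Defs.
From mathcomp Require Import all_boot all_order all_algebra.
From mathcomp Require Import all_classical all_reals all_analysis.
From mathcomp Require Import ring lra.
Import Order.TTheory GRing.Theory Num.Theory.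
Import numFieldNormedType.Exports.
Local Open Scope classical_set_scope.
Local Open Scope ring_scope.

Section Aux.
Variable R : realType.

Definition S1 : pt R * pt R := ((-1, 0), (-1, -1)).
Definition S2 : pt R * pt R := ((1, 1), (0, 1)).
Definition S3 : pt R * pt R := ((0, -1), (1, 0)).
Definition BB : seq (pt R * pt R) := [:: S1; S2; S3].

Lemma cover_pos (a b : R) : 0 < a ->
  exists2 s, s \in BB & exists u : R, segment s (u * a, u * b).
Proof.
move=> ha.
have [hb|hb] := lerP b 0.
  exists S3; first by rewrite !inE eqxx ?orbT.
  have hd : 0 < a - b by lra.
  exists (1 / (a - b)); exists (a / (a - b)); split.
    apply/andP; split; first by apply: divr_ge0; lra.
    by rewrite ler_pdivrMr // mul1r; lra.
  rewrite /S3 /=; congr (_, _); field; lra.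
have [hab|hab] := lerP b a.
  exists S1; first by rewrite !inE eqxx ?orbT.
  exists (-1 / a); exists (b / a); split.
    apply/andP; split; first by apply: divr_ge0; lra.
    by rewrite ler_pdivrMr // mul1r; lra.
  rewrite /S1 /=; congr (_, _); field; lra.
exists S2; first by rewrite !inE eqxx ?orbT.
exists (1 / b); exists (1 - a / b); split.
  have h1 : a / b <= 1 by rewrite ler_pdivrMr // mul1r; lra.
  have h2 : 0 <= a / b by apply: divr_ge0; lra.
  apply/andP; split; lra.
rewrite /S2 /=; congr (_, _); field; lra.
Qed.

Lemma cover0 : RB BB (0, 0).
Proof.
move=> [a b] /= hd.
have [ha|ha|ha] := ltrgtP a 0.
- have ha' : 0 < - a by lra.
  have [s sB [u hs]] := cover_pos (- a) (- b) ha'.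
  exists s => //; exists (u * - a, u * - b); split => //.
  by exists (- u); rewrite /=; congr (_, _); ring.
- have [s sB [u hs]] := cover_pos a b ha.
  exists s => //; exists (u * a, u * b); split => //.
  by exists u; rewrite /=; congr (_, _); ring.
- subst a.
  have hb : b != 0.
    apply: contraNneq hd => ->; by [].
  exists S3; first by rewrite !inE eqxx ?orbT.
  exists (0, -1); split.
    exists (-1 / b); rewrite /=; congr (_, _); first by ring.
    by field.
  exists 0; split; first by rewrite lexx ler01.
  by rewrite /S3 /=; congr (_, _); ring.
Qed.

Lemma isolated (q : pt R) : dist2 (0, 0) q < (1/2) ^+ 2 -> RB BB q -> q = (0, 0).
Proof.
case: q => x y /= hq hR.
rewrite /dist2 /= !expr2 in hq.
have hx2 : x * x < 1/4 by nra.
have hy2 : y * y < 1/4 by nra.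
have hx : -1/2 < x < 1/2.
  apply/andP; split; rewrite ltNge; apply/negP => h; nra.
have hy : -1/2 < y < 1/2.
  apply/andP; split; rewrite ltNge; apply/negP => h; nra.
move/andP: hx => [hx hx']; move/andP: hy => [hy hy'].
have gap : forall d : pt R, d != (0,0) -> ~ line_meets (line (x, y) d) BB -> False.
  by move=> d hd H; apply: H; apply: hR.
have [h1|h1] := ltrP 0 y.
  exfalso; apply: (gap (1, 0)); first by rewrite xpair_eqE oner_eq0.
  move=> [s]; rewrite !inE => /or3P [] /eqP -> [q [[u ->] [t [ht]]]];
    rewrite /S1 /S2 /S3 /= => -[e1 e2]; lra.
have [h2|h2] := ltrP x 0.
  exfalso; apply: (gap (0, 1)); first by rewrite xpair_eqE oner_eq0 andbF.
  move=> [s]; rewrite !inE => /or3P [] /eqP -> [q [[u ->] [t [ht]]]];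
    rewrite /S1 /S2 /S3 /= => -[e1 e2]; lra.
have [h3|h3] := ltrP y x.
  exfalso; apply: (gap (1, 1)); first by rewrite xpair_eqE oner_eq0.
  move=> [s]; rewrite !inE => /or3P [] /eqP -> [q [[u ->] [t [ht]]]];
    rewrite /S1 /S2 /S3 /= => -[e1 e2]; lra.
have -> : x = 0 by lra.
have -> : y = 0 by lra.
by [].
Qed.
End Aux.

Theorem lemma2 (R : realType) :
  exists B : seq (pt R * pt R),
    size B = 3%N /\ uniq B /\ (forall s, s \in B -> s.1 != s.2) /\
    exists p : pt R,
      maximal_region (RB B) [set p] /\ (forall s, s \in B -> ~ segment s p).
Proof.
exists (BB R); split; first by [].
split.
  rewrite /BB /= !inE /S1 /S2 /S3 !xpair_eqE /=.
  apply/andP; split; last (apply/andP; split => //); apply/negP.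
  - by move=> /orP [] /andP [] /andP [] /eqP h1 /eqP h2 _; lra.
  - by move=> /andP [] /andP [] /eqP h1 /eqP h2 _; lra.
split.
  move=> s; rewrite !inE => /or3P [] /eqP -> /=; rewrite /S1 /S2 /S3 /= xpair_eqE;
    apply/negP => /andP [] /eqP h1 /eqP h2; lra.
exists (0, 0); split.
  split.
    split; first by exists 0 => q ->; rewrite normr0.
    split; last exact: connected1.
    apply: accessible_closed_set1; apply: hausdorff_accessible; exact: norm_hausdorff.
  move=> p ->; exists (1/2); first lra.
  apply/seteqP; split => q [hq H].
    by split => //; rewrite H; apply: cover0.
  by split => //; apply: isolated.
move=> s; rewrite !inE => /or3P [] /eqP -> [t [ht]]; rewrite /S1 /S2 /S3 /= => -[e1 e2]; lra.
Qed.
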